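(* Let $\boldsymbol{X}$ be a covariate vector, let $Z$ be an instrument taking values in $\{0_a,1_a,0_b,1_b\}$, let $D(Z=z)\in\{0,1\}$ denote the potential treatment under $Z=z$, and let $Y(D=d)$, $d\in\{0,1\}$, denote the potential outcomes, all defined on a common probability space with distribution $P_0$. Assume the standing nested-monotonicity structure: $D(Z=1_a)-D(Z=0_a)\in\{0,1\}$ and $D(Z=1_b)-D(Z=0_b)\in\{0,1\}$ almost surely, and $D(Z=1_a)-D(Z=0_a)=1$ implies $D(Z=1_b)-D(Z=0_b)=1$. Let $S$ denote the principal stratum, where $\{S=\text{ACO}\}=\{D(Z=1_a)-D(Z=0_a)=1\}$ (always-compliers) and $\{S=\text{SW}\}=\{D(Z=1_b)-D(Z=0_b)=1,\ D(Z=1_a)-D(Z=0_a)=0\}$ (switchers), and assume $P_0(S=\text{ACO}\mid \boldsymbol{X})>0$ and $P_0(S=\text{SW}\mid\boldsymbol{X})>0$ almost surely. Define $\text{ATE}_{P_0}(\boldsymbol{x})=\mathbb{E}_{P_0}[Y(D=1)-Y(D=0)\mid \boldsymbol{X}=\boldsymbol{x}]$, $\text{ACOATE}_{P_0}(\boldsymbol{x})=\mathbb{E}_{P_0}[Y(D=1)-Y(D=0)\mid S=\text{ACO},\boldsymbol{X}=\boldsymbol{x}]$, $\text{SWATE}_{P_0}(\boldsymbol{x})=\mathbb{E}_{P_0}[Y(D=1)-Y(D=0)\mid S=\text{SW},\boldsymbol{X}=\boldsymbol{x}]$. Suppose one of the following holds: (i) (Principal ignorability) $\mathbb{E}_{P_0}[Y(D=d)\mid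 S=s,\boldsymbol{X}]=\mathbb{E}_{P_0}[Y(D=d)\mid \boldsymbol{X}]$ for $d\in\{0,1\}$ and every stratum value $s$; (ii) (No unmeasured common effect modifier) $\text{Cov}_{P_0}\big[(D(Z=1_a)-D(Z=0_a))(Y(D=1)-Y(D=0))\mid \boldsymbol{X}\big]=0$ and $\text{Cov}_{P_0}\big[(D(Z=1_b)-D(Z=0_b))(Y(D=1)-Y(D=0))\mid \boldsymbol{X}\big]=0$, where the covariance is understood as that between $D(Z=1_\cdot)-D(Z=0_\cdot)$ and $Y(D=1)-Y(D=0)$ conditional on $\boldsymbol{X}$. Then $\text{ATE}_{P_0}(\boldsymbol{x})=\text{ACOATE}_{P_0}(\boldsymbol{x})=\text{SWATE}_{P_0}(\boldsymbol{x})$.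
   Context: Nested instrumental variable design: two IV pairs $\{0_a,1_a\}$ and $\{0_b,1_b\}$, with compliers under pair $a$ (always-compliers, ACO) also being compliers under pair $b$; switchers (SW) comply under pair $b$ but not under pair $a$. *)

(* Defs.v *)
From HB Require Import structures.
From mathcomp Require Import all_boot all_order all_algebra.
From mathcomp Require Import all_classical all_reals all_analysis.
Set Implicit Arguments. Unset Strict Implicit. Unset Printing Implicit Defensive.
Import Order.TTheory GRing.Theory Num.Theory.
Local Open Scope classical_set_scope.
Local Open Scope ring_scope.

Inductive inst := z0a | z1a | z0b | z1b.

Inductive stratum := ACO | SW | OTHER.

Section defs.
Context {d d' : measure_display} {T : measurableType d} {T' : measurableType d'}.

(* h : T' -> R is a version of the conditional expectation E[f | X],
   i.e. h o X is sigma(X)-measurable, integrable, and has the same integral as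
   f over every event {X \in B}. *)
Definition cond_exp {R : realType} (P : probability T R) (X : T -> T') (f : T -> R)
    (h : T' -> R) : Prop :=
  [/\ measurable_fun setT h,
      P.-integrable setT (EFin \o (h \o X)) &
      forall B, measurable B ->
        (\int[P]_(w in X @^-1` B) (f w)%:E = \int[P]_(w in X @^-1` B) (h (X w))%:E)%E].

(* h is a version of x |-> E[f | A, X = x], defined as
   E[f 1_A | X = x] / P(A | X = x). *)
Definition cond_exp_given {R : realType} (P : probability T R) (X : T -> T') (A : set T)
    (f : T -> R) (h : T' -> R) : Prop :=
  exists pA m : T' -> R,
    [/\ cond_exp P X (\1_A) pA,
        cond_exp P X (fun w => f w * \1_A w) m &
        forall x, h x = m x / pA x].

Definition complyA (R : realType) (D : inst -> T -> bool) (w : T) : R :=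
  (D z1a w)%:R - (D z0a w)%:R.
Definition complyB (R : realType) (D : inst -> T -> bool) (w : T) : R :=
  (D z1b w)%:R - (D z0b w)%:R.

Definition stratum_event (R : realType) (D : inst -> T -> bool) (s : stratum) : set T :=
  match s with
  | ACO => [set w | complyA R D w = 1]
  | SW => [set w | complyB R D w = 1 /\ complyA R D w = 0]
  | OTHER => ~` ([set w | complyA R D w = 1] `|` [set w | complyB R D w = 1 /\ complyA R D w = 0])
  end.

Definition ite {R : realType} (Y : bool -> T -> R) (w : T) : R := Y true w - Y false w.

(* Conditional covariance Cov[U, V | X] = 0 a.s.:
   E[U V | X] = E[U | X] E[V | X] almost surely (for any versions). *)
Definition cond_uncorrelated {R : realType} (P : probability T R) (X : T -> T') (U V : T -> R)
  : Prop :=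
  forall hU hV hUV, cond_exp P X U hU -> cond_exp P X V hV ->
    cond_exp P X (fun w => U w * V w) hUV ->
    {ae P, forall w, hUV (X w) - hU (X w) * hV (X w) = 0}.

End defs.

(* Main.v *)
Require Import Defs.
From HB Require Import structures.
From mathcomp Require Import all_boot all_order all_algebra.
From mathcomp Require Import all_classical all_reals all_analysis.
From mathcomp Require Import measurable_realfun.
From mathcomp Require Import ring lra.
Import Order.TTheory GRing.Theory Num.Theory.
Local Open Scope classical_set_scope.
Local Open Scope ring_scope.

Section CE.
Context {d d'} {T : measurableType d} {T' : measurableType d'} {R : realType}
  (P : probability T R) (X : T -> T') (mX : measurable_fun setT X).

Let Xm : {mfun T >-> T'} :=
  MeasurableFun.Pack (MeasurableFun.Class (isMeasurableFun.Build _ _ _ _ X mX)).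
Let mu := distribution P Xm.

Lemma ae_pull (Q : T' -> Prop) : {ae mu, forall y, Q y} -> {ae P, forall w, Q (X w)}.
Proof.
case=> A [mA muA sA]; exists (X @^-1` A); split.
- by rewrite -[X in measurable X]setTI; exact: mX.
- exact: muA.
- by move=> w /= nQ; apply: sA.
Qed.

Lemma transfer_int (h : T' -> R) : measurable_fun setT h ->
  P.-integrable setT (EFin \o (h \o X)) -> mu.-integrable setT (EFin \o h).
Proof.
move=> mh ih; apply: (@integrable_pushforward _ _ _ _ _ X mX P setT) => //.
exact/measurable_EFinP.
Qed.

Lemma transfer_integral (h : T' -> R) B : measurable_fun setT h ->
  P.-integrable setT (EFin \o (h \o X)) -> measurable B ->
  (\int[mu]_(y in B) (h y)%:E = \int[P]_(w in X @^-1` B) (h (X w))%:E)%E.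
Proof.
move=> mh ih mB; rewrite (@integral_pushforward _ _ _ _ _ X mX P B) //.
- exact/measurable_EFinP.
- apply: integrableS ih => //; rewrite -[X in measurable X]setTI; exact: mX.
Qed.



Lemma ce_unique (f : T -> R) (h1 h2 : T' -> R) :
  cond_exp P X f h1 -> cond_exp P X f h2 -> {ae P, forall w, h1 (X w) = h2 (X w)}.
Proof.
case=> m1 i1 e1 [m2 i2 e2].
have := @integral_ae_eq _ T' R mu setT measurableT (EFin \o h2) (EFin \o h1)
  (transfer_int _ m1 i1) (proj2 (measurable_EFinP _ _) m2).
case.
  move=> E _ mE; rewrite transfer_integral // transfer_integral //.
  by rewrite -e1 // -e2.
move=> A [mA muA sA]; apply: (ae_pull (fun y => h1 y = h2 y)).
exists A; split => // y /= nQ; apply: sA => /= H; apply: nQ.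
by have := H I => -[].
Qed.

Definition pfc (f : T -> \bar R) (intf : P.-integrable setT f) : {charge set T' -> \bar R}.
Proof. refine (pushforward (induced_charge intf) X); exact: mX. Defined.
Arguments pfc {f}.

Lemma pfcE (f : T -> \bar R) (intf : P.-integrable setT f) B :
  pfc intf B = (\int[P]_(w in X @^-1` B) f w)%E.
Proof. by []. Qed.

Lemma pfc_dom (f : T -> \bar R) (intf : P.-integrable setT f) :
  pfc intf `<< (mu : {sigma_finite_measure set T' -> \bar R}).
Proof.
apply/null_content_dominatesP => A mA muA.
rewrite pfcE; apply: null_set_integral => //.
- by rewrite -[X in measurable X]setTI; exact: mX.
- exact/measurable_funTS/(measurable_int _ intf).
Qed.

Lemma ce_exists (f : T -> R) : P.-integrable setT (EFin \o f) ->
  exists h, cond_exp P X f h.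
Proof.
move=> intf.
have dom := pfc_dom _ intf.
pose g := Radon_Nikodym (pfc intf) (mu : {sigma_finite_measure set T' -> \bar R}).
have gfin y : g y \is a fin_num by apply: Radon_Nikodym_fin_num.
have gint : mu.-integrable setT g by apply: Radon_Nikodym_integrable.
have gE B : measurable B -> pfc intf B = (\int[mu]_(y in B) g y)%E.
  by move=> mB; apply: Radon_Nikodym_integral.
exists (fun y => fine (g y)).
have eg : EFin \o (fun y => fine (g y)) = g by apply/funext => y /=; rewrite fineK.
have mh : measurable_fun setT (fun y => fine (g y)).
  by apply/measurable_EFinP; rewrite eg; exact: measurable_int gint.
have ih : P.-integrable setT (EFin \o ((fun y => fine (g y)) \o X)).
  apply/integrableP; split.
    apply/measurable_EFinP; apply: measurableT_comp => //.
  have := gint; move/integrableP => [_]; rewrite ge0_integral_pushforward //.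
  - by rewrite preimage_setT -eg.
  - by apply: measurableT_comp => //; exact: measurable_int gint.
split => // B mB.
rewrite -[LHS]pfcE gE //.
rewrite -(transfer_integral _ B mh ih mB).
by apply: eq_integral => y _; rewrite fineK.
Qed.


Let mXB B : measurable B -> measurable (X @^-1` B).
Proof. by move=> mB; rewrite -[X in measurable X]setTI; exact: mX. Qed.

Lemma ce_add (f g : T -> R) (hf hg : T' -> R) :
  P.-integrable setT (EFin \o f) -> P.-integrable setT (EFin \o g) ->
  cond_exp P X f hf -> cond_exp P X g hg ->
  cond_exp P X (fun w => f w + g w) (fun y => hf y + hg y).
Proof.
move=> intf intg [mf if1 ef] [mg ig eg]; split.
- exact: measurable_funD.
- apply: (eq_integrable measurableT _ _ _ (integrableD measurableT if1 ig)) => x _ /=.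
  by rewrite EFinD.
- move=> B mB.
  have S u : P.-integrable setT u -> P.-integrable (X @^-1` B) u.
    by apply: integrableS => //; exact: mXB.
  under eq_integral do rewrite EFinD.
  rewrite (integralD (mXB _ mB) (S _ intf) (S _ intg)) ef // eg //.
  under [RHS]eq_integral do rewrite EFinD.
  by rewrite (integralD (mXB _ mB) (S _ if1) (S _ ig)).
Qed.

Lemma ce_sub (f g : T -> R) (hf hg : T' -> R) :
  P.-integrable setT (EFin \o f) -> P.-integrable setT (EFin \o g) ->
  cond_exp P X f hf -> cond_exp P X g hg ->
  cond_exp P X (fun w => f w - g w) (fun y => hf y - hg y).
Proof.
move=> intf intg [mf if1 ef] [mg ig eg]; split.
- exact: measurable_funB.
- apply: (eq_integrable measurableT _ _ _ (integrableB measurableT if1 ig)) => x _ /=.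
  by rewrite EFinB.
- move=> B mB.
  have S u : P.-integrable setT u -> P.-integrable (X @^-1` B) u.
    by apply: integrableS => //; exact: mXB.
  under eq_integral do rewrite EFinB.
  rewrite (integralB_EFin (mXB _ mB) (S _ intf) (S _ intg)) ef // eg //.
  under [RHS]eq_integral do rewrite EFinB.
  by rewrite (integralB_EFin (mXB _ mB) (S _ if1) (S _ ig)).
Qed.

Lemma ce_ae (f g : T -> R) (h : T' -> R) :
  measurable_fun setT f -> measurable_fun setT g ->
  {ae P, forall w, f w = g w} -> cond_exp P X f h -> cond_exp P X g h.
Proof.
move=> mf mg fg [mh ih eh]; split => // B mB; rewrite -eh //.
apply: ae_eq_integral => //.
- exact: mXB.
- by apply/measurable_EFinP; exact: measurable_funTS.
- by apply/measurable_EFinP; exact: measurable_funTS.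
- by apply: filterS fg => w /= -> _.
Qed.

End CE.

Section Aux.
Context {d} {T : measurableType d} {R : realType} (P : probability T R).

Lemma ae_and (A B : T -> Prop) : {ae P, forall w, A w} -> {ae P, forall w, B w} ->
  {ae P, forall w, A w /\ B w}.
Proof. by move=> hA hB; apply: filterS2 hA hB => w a b. Qed.

Lemma ae_mono (A B : T -> Prop) : (forall w, A w -> B w) ->
  {ae P, forall w, A w} -> {ae P, forall w, B w}.
Proof. by move=> AB hA; apply: filterS hA. Qed.

Lemma Dz_indic (D : T -> bool) : (fun w => ((D w)%:R : R)) = \1_[set w | D w].
Proof.
apply/funext => w; rewrite indicE; case: (boolP (D w)) => h.
  by rewrite mem_set.
by rewrite memNset //=; exact/negP.
Qed.

Lemma mDz (D : T -> bool) : measurable [set w | D w] ->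
  measurable_fun setT (fun w => ((D w)%:R : R)).
Proof. by move=> m; rewrite Dz_indic; exact: measurable_indic. Qed.

Lemma int_indic (A : set T) : measurable A -> P.-integrable setT (EFin \o (\1_A : T -> R)).
Proof. by move=> mA; exact: integrable_indic. Qed.

Lemma int_mul_indic (f : T -> R) (A : set T) : measurable A ->
  P.-integrable setT (EFin \o f) -> P.-integrable setT (EFin \o (fun w => f w * \1_A w)).
Proof.
move=> mA intf; apply: (le_integrable measurableT _ _ intf).
- apply/measurable_EFinP; apply: measurable_funM; last exact: measurable_indic.
  exact/measurable_EFinP/(measurable_int _ intf).
- move=> w _ /=; rewrite lee_fin normrM indicE.
  case: (_ \in _) => /=; first by rewrite normr1 mulr1.
  by rewrite normr0 mulr0.
Qed.

End Aux.

Theorem mainTheorem1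
  (d d' : measure_display) (T : measurableType d) (T' : measurableType d')
  (R : realType) (P : probability T R)
  (X : T -> T') (D : inst -> T -> bool) (Y : bool -> T -> R)
  (mX : measurable_fun setT X)
  (mD : forall z, measurable [set w | D z w])
  (iY : forall b, P.-integrable setT (EFin \o Y b))
  (* nested monotonicity *)
  (monA : {ae P, forall w, complyA R D w = 0 \/ complyA R D w = 1})
  (monB : {ae P, forall w, complyB R D w = 0 \/ complyB R D w = 1})
  (nest : {ae P, forall w, complyA R D w = 1 -> complyB R D w = 1})
  (* positivity of P(S = ACO | X) and P(S = SW | X) *)
  (posACO : forall p, cond_exp P X (\1_(stratum_event R D ACO)) p ->
     {ae P, forall w, 0 < p (X w)})
  (posSW : forall p, cond_exp P X (\1_(stratum_event R D SW)) p ->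
     {ae P, forall w, 0 < p (X w)})
  (assum :
     (* (i) principal ignorability *)
     (forall (b : bool) (s : stratum) (ps hs hy : T' -> R),
        cond_exp P X (\1_(stratum_event R D s)) ps ->
        cond_exp_given P X (stratum_event R D s) (Y b) hs ->
        cond_exp P X (Y b) hy ->
        {ae P, forall w, 0 < ps (X w) -> hs (X w) = hy (X w)})
     \/
     (* (ii) no unmeasured common effect modifier *)
     (cond_uncorrelated P X (complyA R D) (ite Y) /\
      cond_uncorrelated P X (complyB R D) (ite Y))) :
  forall ate acoate swate : T' -> R,
    cond_exp P X (ite Y) ate ->
    cond_exp_given P X (stratum_event R D ACO) (ite Y) acoate ->
    cond_exp_given P X (stratum_event R D SW) (ite Y) swate ->
    {ae P, forall w, ate (X w) = acoate (X w) /\ acoate (X w) = swate (X w)}.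
Proof.
move=> ate acoate swate hate [pA [mA [cpA cmA eA]]] [pS [mS [cpS cmS eS]]].
have n10 : (1 : R) <> 0 by apply/eqP; exact: oner_neq0.
have mcA : measurable_fun setT (complyA R D).
  by rewrite /complyA; apply: measurable_funB; apply: mDz; exact: mD.
have mcB : measurable_fun setT (complyB R D).
  by rewrite /complyB; apply: measurable_funB; apply: mDz; exact: mD.
have mEA : measurable (stratum_event R D ACO).
  by have := mcA measurableT _ (measurable_set1 (1 : R)); rewrite setTI.
have mES : measurable (stratum_event R D SW).
  have h1 := mcB measurableT _ (measurable_set1 (1 : R)); rewrite setTI in h1.
  have h0 := mcA measurableT _ (measurable_set1 (0 : R)); rewrite setTI in h0.
  exact: (measurableI _ _ h1 h0).
have iA := int_indic P _ mEA.
have iS := int_indic P _ mES.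
have iite : P.-integrable setT (EFin \o ite Y).
  apply: (eq_integrable measurableT _ _ _ (integrableB measurableT (iY true) (iY false))).
  by move=> w _; rewrite /= /ite EFinB.
have mite : measurable_fun setT (ite Y).
  exact/measurable_EFinP/(measurable_int _ iite).
have iiteA := int_mul_indic P _ _ mEA iite.
have iiteS := int_mul_indic P _ _ mES iite.
suff [k1 k2] : {ae P, forall w, mA (X w) = pA (X w) * ate (X w)} /\
               {ae P, forall w, mS (X w) = pS (X w) * ate (X w)}.
  have pA0 := posACO _ cpA; have pS0 := posSW _ cpS.
  apply: filterS (ae_and P _ _ (ae_and P _ _ k1 k2) (ae_and P _ _ pA0 pS0)).
  move=> w [[h1 h2] [q1 q2]].
  have ea : acoate (X w) = ate (X w).
    by rewrite eA h1 mulrAC divff ?mul1r // gt_eqF.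
  have es : swate (X w) = ate (X w).
    by rewrite eS h2 mulrAC divff ?mul1r // gt_eqF.
  by rewrite ea es.
case: assum => [hI | [hA hB]].
-
  have gen : forall s p m, measurable (stratum_event R D s) ->
      cond_exp P X (\1_(stratum_event R D s)) p ->
      cond_exp P X (fun w => ite Y w * \1_(stratum_event R D s) w) m ->
      {ae P, forall w, 0 < p (X w)} ->
      {ae P, forall w, m (X w) = p (X w) * ate (X w)}.
    move=> s p m mE cp cm ppos.
    have step b : exists hy mb, [/\ cond_exp P X (Y b) hy,
        cond_exp P X (fun w => Y b w * \1_(stratum_event R D s) w) mb &
        {ae P, forall w, mb (X w) = p (X w) * hy (X w)}].
      have [hy chy] := ce_exists P X mX (Y b) (iY b).
      have [mb cmb] := ce_exists P X mX _ (int_mul_indic P (Y b) _ mE (iY b)).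
      exists hy, mb; split => //.
      have cg : cond_exp_given P X (stratum_event R D s) (Y b) (fun y => mb y / p y).
        by exists p, mb; split.
      have H := hI b s p (fun y => mb y / p y) hy cp cg chy.
      apply: filterS2 H ppos => w h1 h2.
      by rewrite -(h1 h2) mulrC divfK // gt_eqF.
    have [hyt [mbt [chyt cmbt et]]] := step true.
    have [hyf [mbf [chyf cmbf ef]]] := step false.
    have cdiff : cond_exp P X (fun w => ite Y w * \1_(stratum_event R D s) w)
                   (fun y => mbt y - mbf y).
      have H := ce_sub P X mX _ _ _ _ (int_mul_indic P (Y true) _ mE (iY true))
        (int_mul_indic P (Y false) _ mE (iY false)) cmbt cmbf.
      apply: (ce_ae P X mX _ _ _ _ _ _ H).
      + apply: measurable_funB; apply: measurable_funM; try exact: measurable_indic;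
        exact/measurable_EFinP/(measurable_int _ (iY _)).
      + by apply: measurable_funM => //; exact: measurable_indic.
      + by apply: aeW => w; rewrite /ite mulrBl.
    have u1 := ce_unique P X mX _ _ _ cm cdiff.
    have cd2 : cond_exp P X (ite Y) (fun y => hyt y - hyf y)
      := ce_sub P X mX _ _ _ _ (iY true) (iY false) chyt chyf.
    have u2 := ce_unique P X mX _ _ _ hate cd2.
    apply: filterS (ae_and P _ _ (ae_and P _ _ u1 u2) (ae_and P _ _ et ef)).
    move=> w [[a b] [c e]].
    by rewrite a c e b mulrBr.
  split.
  + exact: (gen ACO pA mA mEA cpA cmA (posACO _ cpA)).
  + exact: (gen SW pS mS mES cpS cmS (posSW _ cpS)).
-
  have mon := ae_and P _ _ monA (ae_and P _ _ monB nest).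
  have eqA : {ae P, forall w, \1_(stratum_event R D ACO) w = complyA R D w}.
    apply: filterS monA => w [h|h]; rewrite indicE.
    - by rewrite memNset //= h => /esym.
    - by rewrite mem_set //= h.
  have eqB : {ae P, forall w, \1_(stratum_event R D ACO) w + \1_(stratum_event R D SW) w
                 = complyB R D w}.
    apply: filterS mon => w [[hA0|hA1] [[hB0|hB1] hn]]; rewrite !indicE.
    - rewrite (@memNset _ _ w) /=; last by rewrite hA0 => /esym.
      rewrite (@memNset _ _ w) /=; last by rewrite hB0 => -[/esym].
      by rewrite hB0 addr0.
    - rewrite (@memNset _ _ w) /=; last by rewrite hA0 => /esym.
      by rewrite (@mem_set _ _ w) /= ?hB1 ?addr0 ?add0r.
    - by have := hn hA1; rewrite hB0 => /esym.
    - rewrite (@mem_set _ _ w) /=; last by [].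
      rewrite (@memNset _ _ w) /=; last by rewrite hA1 => -[_].
      by rewrite hB1 addr0.
  have cU : cond_exp P X (complyA R D) pA.
    by apply: (ce_ae P X mX _ _ _ _ _ eqA cpA) => //; exact: measurable_indic.
  have cUV : cond_exp P X (fun w => complyA R D w * ite Y w) mA.
    apply: (ce_ae P X mX _ _ _ _ _ _ cmA).
    + by apply: measurable_funM => //; exact: measurable_indic.
    + exact: measurable_funM.
    + by apply: filterS eqA => w h; rewrite h mulrC.
  have k1 : {ae P, forall w, mA (X w) = pA (X w) * ate (X w)}.
    apply: filterS (hA pA ate mA cU hate cUV) => w /eqP.
    by rewrite subr_eq0 => /eqP.
  have cB : cond_exp P X (complyB R D) (fun y => pA y + pS y).
    apply: (ce_ae P X mX _ _ _ _ _ eqB (ce_add P X mX _ _ _ _ iA iS cpA cpS)) => //.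
    by apply: measurable_funD; exact: measurable_indic.
  have cBV : cond_exp P X (fun w => complyB R D w * ite Y w) (fun y => mA y + mS y).
    apply: (ce_ae P X mX _ _ _ _ _ _ (ce_add P X mX _ _ _ _ iiteA iiteS cmA cmS)).
    + by apply: measurable_funD; apply: measurable_funM => //; exact: measurable_indic.
    + exact: measurable_funM.
    + by apply: filterS eqB => w h; rewrite -h; ring.
  have k2 := hB _ _ _ cB hate cBV.
  split => //.
  apply: filterS (ae_and P _ _ k1 k2) => w [h1 h2].
  move: h2; rewrite h1 => /eqP; rewrite subr_eq0 => /eqP h2.
  apply: (addrI (pA (X w) * ate (X w))); rewrite h2; ring.
Qed.
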